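(* For the grid graph $G=P_s \times P_t$ with $s\ge t\ge2$, $\dim_{1,f}(G)=\dim_f(G)$ if and only if $G\in\{P_2 \times P_2, P_3\times P_2, P_4\times P_2, P_3 \times P_3\}$.
   Context: $P_n$ is the path on $n$ vertices and $\times$ denotes the Cartesian product. $d(x,y)$ is the distance in $G$. For a function $g$ on $V(G)$ and $U\subseteq V(G)$, $g(U)=\sum_{s\in U}g(s)$. $R\{x,y\}=\{z: d(x,z)\ne d(y,z)\}$; $g:V(G)\to[0,1]$ is a resolving function if $g(R\{x,y\})\ge1$ for all distinct $x,y$, and $\dim_f(G)$ is the minimum of $g(V(G))$ over resolving functions. $d_1(x,y)=\min\{d(x,y),2\}$, $R_1\{x,y\}=\{z: d_1(x,z)\neq d_1(y,z)\}$; $h:V(G)\to[0,1]$ is a $1$-truncated resolving function if $h(R_1\{x,y\})\ge 1$ for all distinct $x,y$, and $\dim_{1,f}(G)$ is the minimum of $h(V(G))$ over such $h$. *)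

(* Defs.v *)
From HB Require Import structures.
From mathcomp Require Import all_boot all_order all_algebra.
From mathcomp Require Import all_classical all_reals.
Set Implicit Arguments. Unset Strict Implicit. Unset Printing Implicit Defensive.
Import Order.TTheory GRing.Theory Num.Theory.

Section Graphs.
Variable T : finType.
Variable e : rel T.

Fixpoint ball (n : nat) (x : T) : {set T} :=
  if n is n'.+1 then
    ball n' x :|: [set z | [exists y in ball n' x, e y z]]
  else [set x].

(* graph distance: least n with y reachable from x in at most n steps
   (for a connected graph this is < #|T|) *)
Definition dist (x y : T) : nat :=
  find (fun n => y \in ball n x) (iota 0 #|T|).

Definition dist1 (x y : T) : nat := minn (dist x y) 2.

Definition Rset (x y : T) : {set T} := [set z | dist x z != dist y z].
Definition R1set (x y : T) : {set T} := [set z | dist1 x z != dist1 y z].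

Local Open Scope ring_scope.
Local Open Scope classical_set_scope.

Variable R : realType.

Definition unit_valued (g : T -> R) : Prop := forall z, 0 <= g z <= 1.

Definition resolving_fun (g : T -> R) : Prop :=
  unit_valued g /\
  forall x y : T, x != y -> 1 <= \sum_(z in Rset x y) g z.

Definition trunc1_resolving_fun (h : T -> R) : Prop :=
  unit_valued h /\
  forall x y : T, x != y -> 1 <= \sum_(z in R1set x y) h z.

(* fractional metric dimension: minimum (= infimum, attained) of g(V) *)
Definition dimf : R :=
  inf [set r : R | exists g, resolving_fun g /\ r = \sum_z g z].

Definition dim1f : R :=
  inf [set r : R | exists h, trunc1_resolving_fun h /\ r = \sum_z h z].

End Graphs.

Definition path_adj (n : nat) : rel 'I_n :=
  fun i j => (i.+1 == j :> nat) || (j.+1 == i :> nat).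

Definition grid_adj (s t : nat) : rel ('I_s * 'I_t) :=
  fun u v => ((u.1 == v.1) && path_adj u.2 v.2)
          || ((u.2 == v.2) && path_adj u.1 v.1).

(* Main.v *)
Require Import Defs.
From mathcomp Require Import all_boot all_order all_algebra.
From mathcomp Require Import all_classical all_reals.
From mathcomp Require Import zify ring lra.
Set Implicit Arguments. Unset Strict Implicit. Unset Printing Implicit Defensive.
Import Order.TTheory GRing.Theory Num.Theory.

Section Gen.
Variable T : finType.
Variable R : realType.
Local Open Scope ring_scope.
Local Open Scope classical_set_scope.

Definition feas (S : T -> T -> {set T}) (g : T -> R) :=
  unit_valued g /\ forall x y : T, x != y -> 1 <= \sum_(z in S x y) g z.

Definition dimS (S : T -> T -> {set T}) : R :=
  inf [set r : R | exists g, feas S g /\ r = \sum_z g z].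

Lemma dimS_ub S g : feas S g -> dimS S <= \sum_z g z.
Proof.
move=> fg; apply: ge_inf; last by exists g.
exists 0 => r [h [[uh _] ->]]; apply: sumr_ge0 => z _; by case/andP: (uh z).
Qed.

Lemma dimS_lb S v g0 : feas S g0 ->
  (forall g, feas S g -> v <= \sum_z g z) -> v <= dimS S.
Proof.
move=> f0 H; apply: lb_le_inf; first by exists (\sum_z g0 z), g0.
by move=> r [g [fg ->]]; apply: H.
Qed.

Lemma sum_sub (A B : {set T}) (g : T -> R) : (forall z, 0 <= g z) ->
  A \subset B -> \sum_(z in A) g z <= \sum_(z in B) g z.
Proof.
move=> g0 AB; rewrite [X in _ <= X](big_setID A) /= (finset.setIidPr AB) lerDl.
by apply: sumr_ge0 => z _.
Qed.

Lemma dimS_mono (S1 S2 : T -> T -> {set T}) g0 : feas S1 g0 ->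
  (forall x y, S1 x y \subset S2 x y) -> dimS S2 <= dimS S1.
Proof.
move=> f0 sub; apply: (dimS_lb f0) => g [ug fg]; apply: dimS_ub; split=> // x y xy.
apply: (le_trans (fg x y xy)); apply: sum_sub => // z; by case/andP: (ug z).
Qed.

Lemma sumn_map_natr (I : Type) (ps : seq I) (f : I -> nat) :
  (sumn [seq f p | p <- ps])%:R = \sum_(p <- ps) (f p)%:R :> R.
Proof. by elim: ps => [|p ps IH] /=; rewrite ?big_nil ?big_cons // natrD IH. Qed.

Lemma dual_lb (S : T -> T -> {set T}) (g : T -> R) (I : eqType) (ps : seq I)
  (x_ y_ : I -> T) (w : I -> nat) (D : nat) :
  (0 < D)%N -> (forall z, 0 <= g z) ->
  (forall p, p \in ps -> 1 <= \sum_(z in S (x_ p) (y_ p)) g z) ->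
  (forall z, (sumn [seq w p * (z \in S (x_ p) (y_ p)) | p <- ps] <= D)%N) ->
  (sumn [seq w p | p <- ps])%:R / D%:R <= \sum_z g z.
Proof.
move=> D0 g0 H1 Hc; rewrite ler_pdivrMr ?ltr0n // sumn_map_natr.
apply: (@le_trans _ _ (\sum_(p <- ps) (w p)%:R * \sum_(z in S (x_ p) (y_ p)) g z)).
  rewrite big_seq [X in _ <= X]big_seq; apply: ler_sum => p pin.
  by rewrite ler_peMr ?ler0n ?H1.
have -> : \sum_(p <- ps) (w p)%:R * \sum_(z in S (x_ p) (y_ p)) g z =
   \sum_z g z * (sumn [seq w p * (z \in S (x_ p) (y_ p)) | p <- ps])%:R.
  under eq_bigr do rewrite big_mkcond mulr_sumr.
  rewrite exchange_big /=; apply: eq_bigr => z _.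
  rewrite sumn_map_natr mulr_sumr; apply: eq_bigr => p _.
  by case: (z \in _); rewrite /= ?muln1 ?muln0 ?mulr0 ?mulr1 // mulrC.
rewrite mulr_suml; apply: ler_sum => z _; apply: ler_wpM2l => //.
by rewrite ler_nat.
Qed.
End Gen.
Definition absd (a b : nat) : nat := (a - b) + (b - a).
Definition md (a b : nat * nat) : nat := absd a.1 b.1 + absd a.2 b.2.

Section Grid.
Variables s t : nat.
Notation T := ('I_s * 'I_t)%type.
Definition nc (x : T) : nat * nat := (nat_of_ord x.1, nat_of_ord x.2).
Notation e := (@grid_adj s t).

Lemma grid_adjE (u v : T) : e u v = (md (nc u) (nc v) == 1)%N.
Proof.
case: u v => [u1 u2] [v1 v2]; rewrite /grid_adj /path_adj /md /absd /nc /= -!val_eqE /=.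
apply/idP/idP.
- by move=> H; apply/eqP; lia.
- by move/eqP=> H; lia.
Qed.

Lemma md_step (x z : T) : (0 < md (nc x) (nc z))%N ->
  exists y : T, md (nc x) (nc y) = (md (nc x) (nc z)).-1 /\ md (nc y) (nc z) = 1%N.
Proof.
case: x z => [x1 x2] [z1 z2]; rewrite /md /absd /nc /= => H.
have hz1 := ltn_ord z1; have hz2 := ltn_ord z2; have hx1 := ltn_ord x1; have hx2 := ltn_ord x2.
case: (ltngtP x1 z1) => c1.
- have p : (z1 - 1 < s)%N by lia.
  by exists (Ordinal p, z2); rewrite /=; split; lia.
- have p : (z1 + 1 < s)%N by lia.
  by exists (Ordinal p, z2); rewrite /=; split; lia.
case: (ltngtP x2 z2) => c2.
- have p : (z2 - 1 < t)%N by lia.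
  by exists (z1, Ordinal p); rewrite /=; split; lia.
- have p : (z2 + 1 < t)%N by lia.
  by exists (z1, Ordinal p); rewrite /=; split; lia.
lia.
Qed.

Lemma ball_grid n (x : T) : ball e n x = [set z | (md (nc x) (nc z) <= n)%N].
Proof.
elim: n => [|n IH] /=.
  apply/setP => z; rewrite !inE; case: x z => [x1 x2] [z1 z2].
  rewrite xpair_eqE -!val_eqE /md /absd /nc /=; apply/idP/idP => H; lia.
apply/setP => z; have IH2 : forall w, (w \in ball e n x) = (md (nc x) (nc w) <= n)%N by move=> w; rewrite IH inE.
  rewrite !inE IH2; apply/idP/idP.
- case/orP => [H|/existsP [y /andP [Hy Hyz]]]; first lia.
  move: Hy; rewrite IH2 => Hy.
  move: Hyz; rewrite grid_adjE => /eqP Hyz.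
  clear IH IH2; move: Hy Hyz; case: x y z => [x1 x2] [y1 y2] [z1 z2]; rewrite /md /absd /nc /= => *; lia.
- move=> H; case: (leqP (md (nc x) (nc z)) n) => [//|H2].
  have [y [H3 H4]] := md_step (x:=x) (z:=z) (leq_ltn_trans (leq0n _) H2).
  apply/orP; right; apply/existsP; exists y; rewrite IH2 grid_adjE H4 eqxx andbT.
  lia.
Qed.

Lemma find_leq_iota m k a : (a <= m)%N -> (m < a + k)%N ->
  find (fun n => m <= n)%N (iota a k) = (m - a)%N.
Proof.
elim: k a => [|k IH] a H1 H2 /=; first lia.
case: (leqP m a) => H3 /=; first lia.
rewrite IH //; lia.
Qed.

Lemma dist_grid (x y : T) : dist e x y = md (nc x) (nc y).
Proof.
rewrite /dist (eq_find (a2 := fun n => (md (nc x) (nc y) <= n)%N)); last first.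
  by move=> n; rewrite ball_grid inE.
rewrite card_prod !card_ord find_leq_iota ?subn0 //.
case: x y => [x1 x2] [y1 y2]; rewrite /md /absd /nc /=.
have hx1 := ltn_ord x1; have hx2 := ltn_ord x2; have hy1 := ltn_ord y1; have hy2 := ltn_ord y2.
nia.
Qed.
End Grid.

Definition memb (tr : bool) (a b z : nat * nat) : bool :=
  if tr then minn (md a z) 2 != minn (md b z) 2 else md a z != md b z.

Definition allc (m n : nat) (P : nat * nat -> bool) :=
  all (fun i => all (fun j => P (i, j)) (iota 0 n)) (iota 0 m).

Definition csum (m n : nat) (F : nat * nat -> nat) :=
  sumn [seq sumn [seq F (i, j) | j <- iota 0 n] | i <- iota 0 m].

Lemma allcP m n P : allc m n P -> forall i j, (i < m)%N -> (j < n)%N -> P (i, j).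
Proof.
move=> /allP H i j im jn.
have /allP H2 : all (fun j => P (i, j)) (iota 0 n) by apply: H; rewrite mem_iota.
by apply: H2; rewrite mem_iota.
Qed.

Lemma allcI m n (P : nat * nat -> bool) :
  (forall i j, (i < m)%N -> (j < n)%N -> P (i, j)) -> allc m n P.
Proof.
move=> H; apply/allP => i; rewrite mem_iota => /andP [_ im].
by apply/allP => j; rewrite mem_iota => /andP [_ jn]; apply: H.
Qed.

Lemma sum_ord_sumn n (f : nat -> nat) :
  (\sum_(j < n) f j)%N = sumn [seq f j | j <- iota 0 n].
Proof. by rewrite -(big_mkord xpredT f) /index_iota subn0 sumnE big_map. Qed.

Lemma sum_grid_csum m n (F : nat * nat -> nat) :
  (\sum_(z : 'I_m * 'I_n) F (nc z))%N = csum m n F.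
Proof.
rewrite /csum -(pair_big xpredT xpredT (fun (i : 'I_m) (j : 'I_n) => F (i : nat, j : nat))) /=.
rewrite (eq_bigr (fun i : 'I_m => sumn [seq F (i : nat, j) | j <- iota 0 n])); last first.
  by move=> i _; rewrite (sum_ord_sumn n (fun j => F (i : nat, j))).
by rewrite (sum_ord_sumn m (fun i => sumn [seq F (i, j) | j <- iota 0 n])).
Qed.

Lemma md0 a b : (md a b == 0)%N = (a == b).
Proof. by case: a b => [a1 a2] [b1 b2]; rewrite xpair_eqE /md /absd /=; apply/idP/idP => H; lia. Qed.

Section GridLP.
Variable R : realType.
Variables s t : nat.
Notation T := ('I_s.+1 * 'I_t.+1)%type.
Notation e := (@grid_adj s.+1 t.+1).
Local Open Scope ring_scope.

Definition Str (tr : bool) : T -> T -> {set T} := if tr then R1set e else Rset e.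

Lemma mem_Str tr x y z : (z \in Str tr x y) = memb tr (nc x) (nc y) (nc z).
Proof. by case: tr; rewrite /Str /R1set /Rset inE /dist1 !dist_grid. Qed.

Lemma nc_inj (x y : T) : (nc x == nc y) = (x == y).
Proof. by case: x y => [x1 x2] [y1 y2]; rewrite !xpair_eqE. Qed.

Lemma allcT P : allc s.+1 t.+1 P -> forall z : T, P (nc z).
Proof. by move=> H z; apply: (allcP H (ltn_ord z.1) (ltn_ord z.2)). Qed.

Lemma feas1 tr : feas (Str tr) (fun _ => 1 : R).
Proof.
split; first by move=> z; rewrite ler01 lexx.
move=> x y xy.
have xin : x \in Str tr x y.
  rewrite mem_Str /memb; have := md0 (nc x) (nc x); rewrite eqxx => /eqP ->.
  have := md0 (nc y) (nc x); rewrite nc_inj (eq_sym y) (negbTE xy).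
  by case: tr => /negbT H; rewrite ?min0n //; apply: contra H => /eqP H; apply/eqP; lia.
apply: (@le_trans _ _ (\sum_(z in [set x]) (1 : R))); first by rewrite big_set1.
by apply: sum_sub => //; rewrite finset.sub1set.
Qed.

Definition toT (a : nat * nat) : T := (inord a.1, inord a.2).
Lemma nc_toT a : (a.1 <= s)%N -> (a.2 <= t)%N -> nc (toT a) = a.
Proof. by case: a => a1 a2 /= h1 h2; rewrite /nc /= !inordK. Qed.

Definition validp (p : ((nat * nat) * (nat * nat)) * nat) :=
  [&& p.1.1.1 <= s, p.1.1.2 <= t, p.1.2.1 <= s, p.1.2.2 <= t & p.1.1 != p.1.2]%N.

Lemma grid_lb tr ps D : (0 < D)%N -> all validp ps ->
  allc s.+1 t.+1 (fun z => sumn [seq p.2 * memb tr p.1.1 p.1.2 z | p <- ps] <= D)%N ->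
  (sumn [seq p.2 | p <- ps])%:R / D%:R <= @dimS _ R (Str tr).
Proof.
move=> D0 /allP V C; apply: (dimS_lb (feas1 tr)) => g [ug fg].
apply: (dual_lb (x_ := fun p => toT p.1.1) (y_ := fun p => toT p.1.2)) => //.
- by move=> z; case/andP: (ug z).
- move=> p /V /and5P [h1 h2 h3 h4 h5]; apply: fg; rewrite -nc_inj !nc_toT //.
- move=> z; have /= := allcT C z.
  suff -> : [seq (p.2 * (z \in Str tr (toT p.1.1) (toT p.1.2)))%N | p <- ps] =
     [seq (p.2 * memb tr p.1.1 p.1.2 (nc z))%N | p <- ps] by [].
  by apply/eq_in_map => p /V /and5P [h1 h2 h3 h4 h5]; rewrite mem_Str !nc_toT.
Qed.

Lemma grid_ub tr (c : nat * nat -> nat) D : (0 < D)%N ->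
  allc s.+1 t.+1 (fun z => c z <= D)%N ->
  allc s.+1 t.+1 (fun x => allc s.+1 t.+1 (fun y =>
     (x != y) ==> (D <= csum s.+1 t.+1 (fun z => c z * memb tr x y z))%N)) ->
  @dimS _ R (Str tr) <= (csum s.+1 t.+1 c)%:R / D%:R.
Proof.
move=> D0 Hc Hr; set g := fun z : T => (c (nc z))%:R / D%:R : R.
have -> : (csum s.+1 t.+1 c)%:R / D%:R = \sum_z g z.
  by rewrite /g -mulr_suml -natr_sum sum_grid_csum.
apply: dimS_ub; split.
- move=> z; rewrite /g divr_ge0 ?ler0n //= ler_pdivrMr ?ltr0n // mul1r ler_nat.
  exact: (allcT Hc).
- move=> x y xy; have /= := allcT (allcT Hr x) y; rewrite nc_inj xy /= => H.
  rewrite big_mkcond /=.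
  have E : forall z, (if z \in Str tr x y then g z else 0) =
      (c (nc z) * memb tr (nc x) (nc y) (nc z))%:R / D%:R.
    by move=> z; rewrite mem_Str; case: memb; rewrite /g ?muln1 ?muln0 ?mul0r.
  rewrite (eq_bigr _ (fun z _ => E z)) -mulr_suml -natr_sum.
  rewrite (sum_grid_csum _ _ (fun z => (c z * memb tr (nc x) (nc y) z)%N)).
  by rewrite ler_pdivlMr ?ltr0n // mul1r ler_nat.
Qed.
End GridLP.

Local Open Scope ring_scope.

Lemma dimfE (R : realType) s t : dimf (@grid_adj s.+1 t.+1) R = @dimS _ R (Str (s:=s) (t:=t) false).
Proof. by []. Qed.
Lemma dim1fE (R : realType) s t : dim1f (@grid_adj s.+1 t.+1) R = @dimS _ R (Str (s:=s) (t:=t) true).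
Proof. by []. Qed.


Lemma absd0n n : absd 0 n = n. Proof. by rewrite /absd sub0n subn0. Qed.
Lemma absdn0 n : absd n 0 = n. Proof. by rewrite /absd sub0n subn0 addn0. Qed.
Lemma absd_le a b : (a <= b)%N -> absd a b = (b - a)%N.
Proof. by move=> h; rewrite /absd (eqP h). Qed.
Lemma absd_ge a b : (b <= a)%N -> absd a b = (a - b)%N.
Proof. by move=> h; rewrite /absd (eqP h) addn0. Qed.

Lemma absd1S n : absd 1 n.+1 = n.
Proof. rewrite /absd; lia. Qed.

Lemma memb_near a b z : memb true a b z -> (md a z <= 1)%N || (md b z <= 1)%N.
Proof.
rewrite /memb; case: leqP => // h1; case: leqP => // h2.
by rewrite (minn_idPr h1) (minn_idPr h2) eqxx.
Qed.

Lemma md_le1 a z : (md a z <= 1)%N -> (z.1 <= a.1 + 1)%N && (a.1 <= z.1 + 1)%N && (z.2 <= a.2 + 1)%N.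
Proof. case: a z => [a1 a2] [z1 z2]; rewrite /md /absd /= => h. apply/andP; split; [apply/andP; split|]; lia. Qed.

Lemma cover3 s t : (4 <= s)%N -> (1 <= t)%N ->
  allc s.+1 t.+1 (fun z => sumn [seq p.2 * memb true p.1.1 p.1.2 z |
     p <- [:: ((0,0),(1,1),1); ((0,1),(1,0),1); ((s,0),(s,1),1)]%N] <= 1)%N.
Proof.
move=> hs ht; apply: allcI => i j hi hj.
change (1 * memb true (0,0)%N (1,1)%N (i,j) + (1 * memb true (0,1)%N (1,0)%N (i,j) +
   (1 * memb true (s,0)%N (s,1)%N (i,j) + 0)) <= 1)%N.
rewrite !mul1n addn0.
have nA : memb true (0,0)%N (1,1)%N (i,j) -> (i <= 2)%N && (j <= 2)%N.
  by move/memb_near/orP => [] /md_le1 /= /andP [/andP [h1 h2] h3]; rewrite (leq_trans h1) // (leq_trans h3).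
have nB : memb true (0,1)%N (1,0)%N (i,j) -> (i <= 2)%N && (j <= 2)%N.
  by move/memb_near/orP => [] /md_le1 /= /andP [/andP [h1 h2] h3]; rewrite (leq_trans h1) // (leq_trans h3).
have nC : memb true (s,0)%N (s,1)%N (i,j) -> (s <= i + 1)%N.
  by move/memb_near/orP => [] /md_le1 /= /andP [/andP [h1 h2] h3].
have AB : ~~ (memb true (0,0)%N (1,1)%N (i,j) && memb true (0,1)%N (1,0)%N (i,j)).
  apply/negP => /andP [hA hB]; have /andP [i2 j2] := nA hA; move: hA hB i2 j2.
  by clear nA nB nC; case: i {hi} => [|[|[|i]]] //; case: j {hj} => [|[|[|j]]].
case hA : (memb true (0,0)%N (1,1)%N (i,j)); case hB : (memb true (0,1)%N (1,0)%N (i,j));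
  case hC : (memb true (s,0)%N (s,1)%N (i,j)) => //; rewrite ?hA ?hB in AB => //.
- have /andP [i2 _] := nA hA; have := nC hC; move: i2 hs; clear; lia.
- have /andP [i2 _] := nB hB; have := nC hC; move: i2 hs; clear; lia.
Qed.




Lemma dimf_le2 (R : realType) s t : (1 <= s)%N -> @dimS _ R (Str (s:=s) (t:=t) false) <= 2.
Proof.
move=> hs; set c1 := toT s t (0,0)%N; set c2 := toT s t (s,0)%N.
have n1 : nc c1 = (0,0)%N by rewrite nc_toT.
have n2 : nc c2 = (s,0)%N by rewrite nc_toT.
have c12 : c1 != c2 by rewrite -nc_inj n1 n2 xpair_eqE eqxx andbT eq_sym -lt0n.
set g := fun z => ((z == c1) || (z == c2))%:R : R.
have g0 : forall z, 0 <= g z by move=> z; rewrite /g ler0n.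
have -> : 2 = \sum_z g z.
  rewrite (bigD1 c1) //= (bigD1 c2) /=; last by rewrite eq_sym.
  rewrite big1 => [|z /andP [z1 z2]]; last by rewrite /g (negbTE z1) (negbTE z2).
  by rewrite /g eqxx /= eqxx orbT addr0.
apply: dimS_ub; split.
- by move=> z; rewrite /g; case: (_ || _); rewrite ?lexx ?ler01.
- move=> x y xy.
  have one : forall c, (c == c1) || (c == c2) -> c \in Str false x y ->
      1 <= \sum_(z in Str false x y) g z.
    move=> c hc cin; apply: (@le_trans _ _ (\sum_(z in [set c]) g z)).
      by rewrite big_set1 /g hc.
    by apply: sum_sub => //; rewrite finset.sub1set.
  have : (c1 \in Str false x y) || (c2 \in Str false x y).
    rewrite !mem_Str n1 n2 /memb; move: xy; rewrite -nc_inj.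
    clear one; case: x y => [[x1 hx1] [x2 hx2]] [[y1 hy1] [y2 hy2]].
    rewrite /nc /= xpair_eqE /md /= !absdn0.
    have hx' : (x1 <= s)%N := hx1. have hy' : (y1 <= s)%N := hy1.
    rewrite (absd_le hx') (absd_le hy') => H.
    rewrite -negb_and; apply/negP => /andP [/eqP E1 /eqP E2]; move/negP: H; apply.
    move: E1 E2 hx1 hy1; clear; move=> E1 E2 hx1 hy1; apply/andP; split; apply/eqP; lia.
  by case/orP => cin; [apply: (one c1) | apply: (one c2)]; rewrite ?eqxx ?orbT.
Qed.

Definition cf (l : seq (nat * nat)) (z : nat * nat) : nat := (z \in l).

Lemma mono_dim (R : realType) s t :
  @dimS _ R (Str (s:=s) (t:=t) false) <= @dimS _ R (Str (s:=s) (t:=t) true).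
Proof.
apply: (dimS_mono (feas1 R s t true)) => x y; apply/fintype.subsetP => z.
rewrite !mem_Str /memb => H; apply/negP => /eqP E; by rewrite E eqxx in H.
Qed.

Theorem proposition3p10 (R : realType) (s t : nat) :
  (2 <= t)%N -> (t <= s)%N ->
  (dim1f (@grid_adj s t) R = dimf (@grid_adj s t) R <->
   (s, t) \in [:: (2, 2); (3, 2); (4, 2); (3, 3)]%N).
Proof.
case: s => [|s]; first by case: t.
case: t => [|t] // ht hs; rewrite dim1fE dimfE.
have mono := mono_dim R s t.
split.
- move=> Heq; apply/negPn/negP => Hn; exfalso.
  have le2 := @dimf_le2 R s t ltac:(lia).
  case: (leqP 4 s) => s4.
    have H : ((3%N)%:R / (1%N)%:R : R) <= @dimS _ R (Str (s:=s) (t:=t) true).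
      apply: (@grid_lb R _ _ _ [:: ((0,0),(1,1),1); ((0,1),(1,0),1); ((s,0),(s,1),1)]%N) => //.
        by rewrite /= /validp /= ?xpair_eqE /=; lia.
      by apply: cover3; lia.
    move: H; rewrite Heq divr1 => H; have := le_trans H le2; lra.
  move: Hn Heq le2 mono ht hs s4; case: s => [|[|[|[|s]]]] //; case: t => [|[|[|[|t]]]] //= _.
  + move=> Heq le2 _ _ _ _.
    have H : ((55%N)%:R / (20%N)%:R : R) <= @dimS _ R (Str (s:=3) (t:=2) true).
      apply: (@grid_lb R _ _ _ [:: ((0,0),(0,2),5); ((0,0),(2,0),7); ((0,1),(1,0),4);
         ((0,1),(1,2),6); ((0,2),(2,2),3); ((1,0),(3,0),2); ((1,2),(3,2),8);
         ((2,0),(3,1),9); ((2,1),(3,0),10); ((2,2),(3,1),1)]%N) => //; by vm_compute.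
    move: H; rewrite Heq => H; have := le_trans H le2; lra.
  + move=> Heq le2 _ _ _ _.
    have H : ((3%N)%:R / (1%N)%:R : R) <= @dimS _ R (Str (s:=3) (t:=3) true).
      apply: (@grid_lb R _ _ _ [:: ((0,0),(1,1),1); ((0,1),(1,0),1); ((2,3),(3,2),1)]%N) => //;
        by vm_compute.
    move: H; rewrite Heq divr1 => H; have := le_trans H le2; lra.
- have lbAB : forall s t, (1 <= s)%N -> (1 <= t)%N ->
      ((2%N)%:R / (1%N)%:R : R) <= @dimS _ R (Str (s:=s) (t:=t) false).
    move=> s' t' h1 h2; apply: (@grid_lb R _ _ _ [:: ((0,0),(1,1),1); ((0,1),(1,0),1)]%N) => //.
      by rewrite /= /validp /= ?xpair_eqE /=; lia.
    apply: allcI => i j hi hj; rewrite /= !mul1n addn0 /memb /md /=.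
    case: i {hi} => [|i]; case: j {hj} => [|j] //=. 1-3: rewrite ?absd0n ?absdn0.
    1-3: by rewrite ?absd1S ?add0n ?addn0 ?add1n ?addn1 ?addSn ?addnS ?eqxx /= ?add0n ?addn0 ?leq_b1.
  rewrite !inE !xpair_eqE => Hin; apply/eqP; rewrite eq_le mono andbT.
  have lb := lbAB s t ltac:(lia) ltac:(lia); rewrite divr1 in lb.
  apply: le_trans lb.
  move: Hin; case: s {mono hs} => [|[|[|[|s]]]] //; case: t {ht} => [|[|[|[|t]]]] //= _.
  + have := @grid_ub R 1 1 true (cf [:: (0,0); (0,1)]%N) 1 erefl.
    by rewrite divr1; apply; vm_compute.
  + have := @grid_ub R 2 1 true (cf [:: (0,0); (0,1); (1,0); (1,1)]%N) 2 erefl.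
    by move=> H; apply: le_trans (H _ _) _; [vm_compute|vm_compute|rewrite (_ : csum _ _ _ = 4%N); [lra|vm_compute]].
  + have := @grid_ub R 2 2 true (cf [:: (0,1); (1,0); (1,2); (2,1)]%N) 2 erefl.
    by move=> H; apply: le_trans (H _ _) _; [vm_compute|vm_compute|rewrite (_ : csum _ _ _ = 4%N); [lra|vm_compute]].
  + have := @grid_ub R 3 1 true (cf [:: (1,0); (1,1); (2,0); (2,1)]%N) 2 erefl.
    by move=> H; apply: le_trans (H _ _) _; [vm_compute|vm_compute|rewrite (_ : csum _ _ _ = 4%N); [lra|vm_compute]].
Qed.
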